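(* Let $\alpha\ge 1$. Suppose that every canonical instance admits an $\alpha$-WMMS allocation. Then every chore-allocation instance (with positive weights and nonnegative additive cost functions) admits a $4\alpha$-WMMS allocation.
   Context: A chore-allocation instance consists of a set $\mathcal N=\{a_1,\dots,a_n\}$ of agents, a finite set $\mathcal M=\{e_1,\dots,e_m\}$ of indivisible items (chores), positive weights $w_1,\dots,w_n$, and additive cost functions $v_i:2^{\mathcal M}\to\mathbb R_{\ge 0}$, i.e. $v_i(S)=\sum_{e\in S}v_i(e)$. An allocation is an ordered partition $(A_1,\dots,A_n)$ of $\mathcal M$ (bundles may be empty); $\mathcal A$ denotes the set of all allocations. The weighted maximin share of agent $a_i$ is $\mathsf{WMMS}_i=w_i\cdot\min_{(A_1,\dots,A_n)\in\mathcal A}\max_{j\in[n]}\frac{v_i(A_j)}{w_j}$. For $\alpha\ge1$, an allocation $(A_1,\dots,A_n)$ is $\alpha$-WMMS if $v_i(A_i)\le\alpha\cdot\mathsf{WMMS}_i$ for every agent $a_i$. An instance is canonical if: (i) agents are indexed so that $w_1\ge w_2\ge\cdots\ge w_n$, $\sum_i w_i=1$, and every $w_i=w_1/2^p$ for some nonnegative integer $p$; (ii) $v_i(\mathcal M)=1$ for every agent, and for every agent $a_i$ and item $e$, $v_i(e)$ is either $0$ or equal to $w_1/2^p$ for some nonnegative integer $p$; (iii) (identical ordering) $v_i(e_1)\ge v_i(e_2)\ge\cdots\ge v_i(e_m)$ for every agent $a_i$; (iv) $\mathsf{WMMS}_i=w_i$ for every agent $a_i$. *)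

(* Defs.v *)
From HB Require Import structures.
From mathcomp Require Import all_boot all_order all_algebra.
From mathcomp Require Import reals.
Set Implicit Arguments. Unset Strict Implicit. Unset Printing Implicit Defensive.
Import Order.TTheory GRing.Theory Num.Theory.
Local Open Scope ring_scope.

(* An allocation (ordered partition (A_1,..,A_n) of M, bundles possibly empty)
   is a function A : {ffun 'I_m -> 'I_n.+1}; A_j = [set e | A e == j]. *)

Section Defs.
Variables (R : realType) (n m : nat).
Implicit Types (w : 'I_n.+1 -> R) (v : 'I_n.+1 -> 'I_m -> R)
  (A : {ffun 'I_m -> 'I_n.+1}).

Definition bundle_cost v A (i j : 'I_n.+1) : R := \sum_(e | A e == j) v i e.

(* max_j v_i(A_j) / w_j  (costs are nonnegative, so 0 is a neutral start) *)
Definition max_share w v (i : 'I_n.+1) A : R :=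
  \big[Num.max/0]_(j < n.+1) (bundle_cost v A i j / w j).

(* WMMS_i = w_i * min_{A allocation} max_j v_i(A_j)/w_j ;
   the min over the finite nonempty set of allocations is taken with the
   (idempotent) seed max_share of the allocation giving everything to agent 0 *)
Definition WMMS w v (i : 'I_n.+1) : R :=
  w i * \big[Num.min/max_share w v i [ffun=> ord0]]_(A : {ffun 'I_m -> 'I_n.+1})
          max_share w v i A.

Definition is_alpha_WMMS (alpha : R) w v A : Prop :=
  forall i : 'I_n.+1, bundle_cost v A i i <= alpha * WMMS w v i.

Definition valid_instance w v : Prop :=
  (forall i, 0 < w i) /\ (forall i e, 0 <= v i e).

(* canonical instance (conditions (i)-(iv)); agent a_1 is index ord0 *)
Definition canonical_instance w v : Prop :=
  [/\ valid_instance w v,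
      (forall i j : 'I_n.+1, (i <= j)%N -> w j <= w i)
      /\ \sum_(i < n.+1) w i = 1
      /\ (forall i, exists p : nat, w i = w ord0 / 2%:R ^+ p),
      (forall i, \sum_(e < m) v i e = 1)
      /\ (forall i e, v i e = 0 \/ exists p : nat, v i e = w ord0 / 2%:R ^+ p),
      (forall i (e e' : 'I_m), (e <= e')%N -> v i e' <= v i e)
    &
      (forall i, WMMS w v i = w i)].

End Defs.

(* Main.v *)
Require Import Defs.
From HB Require Import structures.
From mathcomp Require Import all_boot all_order all_algebra.
From mathcomp Require Import reals.
From mathcomp Require Import ring lra zify.
Set Implicit Arguments. Unset Strict Implicit. Unset Printing Implicit Defensive.
Import Order.TTheory GRing.Theory Num.Theory.
Local Open Scope ring_scope.

Lemma sortperm (R : realType) (N : nat) (f : 'I_N -> R) :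
  exists rho : 'I_N -> 'I_N, bijective rho /\
    (forall k k' : 'I_N, (k <= k')%N -> f (rho k') <= f (rho k)).
Proof.
set r := (fun a b : 'I_N => f b <= f a).
set s := sort r (enum 'I_N).
have ss : size s = N by rewrite size_sort size_enum_ord.
have us : uniq s by rewrite sort_uniq enum_uniq.
have tr : transitive r by move=> a b c; rewrite /r => h1 h2; exact: le_trans h2 h1.
have tt : total r by move=> a b; rewrite /r le_total.
have so : sorted r s by apply: sort_sorted.
exists (fun k => nth k s k); split.
  apply: injF_bij => k k'.
  rewrite (set_nth_default k') ?ss ?ltn_ord //.
  move/eqP; rewrite nth_uniq ?ss ?ltn_ord // => /eqP; exact: val_inj.
move=> k k' kk.
rewrite (set_nth_default k) ?ss ?ltn_ord //.
have := sorted_leq_nth tr (fun a => lexx _) k so.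
move=> /(_ k k'); rewrite !inE ss !ltn_ord; apply => //.
Qed.

Lemma card_lt_bound (m s : nat) (T : {set 'I_m}) (sm : (s <= m)%N) :
  (forall k, k \in T -> (k < s)%N) -> (#|T| <= s)%N.
Proof.
move=> H.
have -> : #|T| = (\sum_(k < m) (if k \in T then 1 else 0))%N.
  by rewrite -big_mkcond /= sum1_card.
apply: (@leq_trans (\sum_(k < m) (if (k < s)%N then 1 else 0))%N).
  apply: leq_sum => k _; case: ifP => // /H ->; done.
rewrite -big_mkcond /= (big_ord_narrow sm) sum1_card card_ord.
done.
Qed.

Lemma picking (R : realType) (n m : nat) (v : 'I_n.+1 -> 'I_m -> R)
  (rho : 'I_n.+1 -> 'I_m -> 'I_m) (o : 'I_m -> 'I_n.+1) :
  (forall i, injective (rho i)) ->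
  (forall i (k k' : 'I_m), (k <= k')%N -> v i (rho i k') <= v i (rho i k)) ->
  exists A : {ffun 'I_m -> 'I_n.+1}, forall i,
    \sum_(e | A e == i) v i e <= \sum_(k | o k == i) v i (rho i k).
Proof.
move=> inj mono.
pose g i := invF (inj i).
have gK1 i : cancel (rho i) (g i) by exact: invF_f.
have gK2 i : cancel (g i) (rho i) by exact: f_invF.
suff gen : forall s, (s <= m)%N -> forall S : {set 'I_m}, #|S| = s ->
  exists f : 'I_m -> 'I_n.+1, forall i,
    \sum_(e | (e \in S) && (f e == i)) v i e <=
    \sum_(k : 'I_m | (k < s)%N && (o k == i)) v i (rho i k).
  have [f hf] := gen m (leqnn m) setT (etrans (cardsT _) (card_ord m)).
  exists [ffun e => f e] => i.
  have := hf i.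
  rewrite (eq_bigl (fun e => f e == i)); last by move=> e; rewrite inE.
  have -> : \sum_(k < m | (k < m)%N && (o k == i)) v i (rho i k) = \sum_(k | o k == i) v i (rho i k).
    by apply: eq_bigl => k; rewrite ltn_ord.
  move=> h; apply: le_trans h; rewrite le_eqVlt; apply/orP; left; apply/eqP.
  by apply: eq_bigl => e; rewrite ffunE.
elim=> [|s IH] sm S cS.
  exists (fun _ => ord0) => i.
  rewrite big_pred0; last by move=> e; rewrite (cards0_eq cS) inE.
  by rewrite big_pred0.
have sm' : (s < m)%N by [].
pose ks := Ordinal sm'.
pose a := o ks.
have [es esS hes] : exists2 e, e \in S & (s <= g a e)%N.
  case: (boolP [exists e in S, (s <= g a e)%N]) => [/exists_inP [e h1 h2] | /exists_inPn H].
    by exists e.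
  exfalso.
  have : (#|[set g a e | e in S]| <= s)%N.
    apply: card_lt_bound; first exact: ltnW.
    move=> k /imsetP [e eS ->]; have := H e eS; by rewrite -ltnNge.
  by rewrite card_imset ?cS ?ltnn //; exact: can_inj (gK2 a).
have vles : v a es <= v a (rho a ks).
  by rewrite -{1}(gK2 a es); apply: mono.
have cS' : #|S :\ es| = s by move: cS; rewrite (cardsD1 es) esS add1n => -[].
have [f' hf'] := IH (ltnW sm) (S :\ es) cS'.
exists (fun e => if e == es then a else f' e) => i.
rewrite (bigID (fun e => e == es)) /=.
rewrite [X in _ <= X](bigID (fun k => k == ks)) /=.
apply: lerD.
  case ai: (a == i).
    rewrite (eq_bigl (fun e => e == es)); last first.
      by move=> e; case: (e =P es) => [->|]; rewrite ?esS ?eqxx ?ai ?andbF.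
    rewrite big_pred1_eq.
    rewrite (eq_bigl (fun k => k == ks)); last first.
      by move=> k; case: (k =P ks) => [->|]; rewrite ?ltnSn ?ai ?andbF //= andbT.
    by rewrite big_pred1_eq -(eqP ai).
  rewrite big_pred0; last by move=> e; case: (e =P es) => [->|]; rewrite ?ai ?andbF.
  rewrite big_pred0 //.
  by move=> k; case: (k =P ks) => [->|]; rewrite ?andbF //= andbT /= -/a ai andbF.
have := hf' i.
have -> : \sum_(e | (e \in S :\ es) && (f' e == i)) v i e =
   \sum_(e | (e \in S) && ((if e == es then a else f' e) == i) && ~~ (e == es)) v i e.
  apply: eq_bigl => e.
  case: (e =P es) => [->|/eqP ne].
    rewrite in_setD1 eqxx /= andbF. done.
  by rewrite in_setD1 (negbTE ne) /= andbT.
have -> : \sum_(k : 'I_m | (k < s)%N && (o k == i)) v i (rho i k) =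
   \sum_(k : 'I_m | (k < s.+1)%N && (o k == i) && ~~ (k == ks)) v i (rho i k).
  apply: eq_bigl => k.
  rewrite (_ : (k != ks) = (val k != s)) // ltnS.
  rewrite ltn_neqAle; case: (o k == i); case: (k <= s)%N; case: (val k != s); done.
done.
Qed.

Lemma fill_nat (B : nat) (c : nat -> nat) : exists g : nat -> nat,
  (forall t, (g t <= B)%N) /\ forall j, (j <= B)%N ->
  count (fun t => g t == j) (iota 0 (\sum_(i < B.+1) c i)) = c j.
Proof.
elim: B => [|B [g' [hb hc]]].
  exists (fun _ => 0%N); split => // j; rewrite leqn0 => /eqP ->.
  by rewrite big_ord1 (eq_count (a2 := predT)) // count_predT size_iota.
set S := (\sum_(i < B.+1) c i).
exists (fun t => if (t < S)%N then g' t else B.+1); split.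
  by move=> t; case: ifP => // _; apply: leq_trans (hb t) _.
move=> j hj.
rewrite big_ord_recr /= -/S iotaD count_cat add0n.
rewrite (@eq_in_count _ _ (fun t => g' t == j) (iota 0 S)); last first.
  by move=> t; rewrite mem_iota add0n => /andP [_ ->].
rewrite (@eq_in_count _ _ (fun t => B.+1 == j) (iota S _)); last first.
  move=> t; rewrite mem_iota ?add0n => /andP [h _]; by rewrite ltnNge h.
have hcS : forall j, (j <= B)%N -> count (fun t => g' t == j) (iota 0 S) = c j by exact: hc.
case: (ltngtP j B.+1) => [jl|jg|ej].
- rewrite count_pred0 addn0; exact: hcS.
- by move: hj; rewrite leqNgt jg.
- rewrite (@eq_count _ _ pred0); last first.
    move=> t /=; apply/negbTE; rewrite neq_ltn; apply/orP; left.
    by rewrite ej ltnS hb.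
  by rewrite count_pred0 count_predT size_iota ej.
Qed.

Lemma fill (R : realType) (B F : nat) (c : 'I_B.+1 -> nat) (d : R) :
  (\sum_j c j <= F)%N -> exists g : 'I_F -> 'I_B.+1, forall j,
   \sum_(t | g t == j) (if (t < \sum_j c j)%N then d else 0) = d * (c j)%:R.
Proof.
move=> hF.
have [g' [hb hc]] := fill_nat B (fun i => c (inord i)).
set S := \sum_j c j.
have eS : \sum_(i < B.+1) c (inord i) = S by apply: eq_bigr => i _; rewrite inord_val.
rewrite eS in hc.
exists (fun t => inord (g' t)) => j.
rewrite -big_mkcondr /=.
rewrite (eq_bigl (fun t : 'I_F => (g' t == j) && (t < S)%N)); last first.
  by move=> t; rewrite -val_eqE /= inordK // ltnS.
rewrite (eq_bigr (fun _ => d * (1%N)%:R)); last by move=> *; rewrite mulr1.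
rewrite -mulr_sumr -natr_sum.
suff -> : (\sum_(i < F | (g' i == j) && (i < S)%N) 1)%N = c j by [].
rewrite -(big_mkord (fun t => (g' t == j) && (t < S)%N) (fun _ => 1%N)).
rewrite sum1_count /index_iota subn0.
rewrite -(subnKC hF) iotaD count_cat add0n.
rewrite (@eq_in_count _ _ (fun t => g' t == j)); last first.
  by move=> t; rewrite mem_iota add0n => /andP [_ ->]; rewrite andbT.
rewrite (@eq_in_count _ _ pred0 (iota S _)); last first.
  by move=> t; rewrite mem_iota => /andP [h _]; rewrite /= ltnNge h andbF.
rewrite count_pred0 addn0 (hc j) ?inord_val //; exact: ltn_ord j.
Qed.

Lemma bc_sum (R : realType) n m (v : 'I_n.+1 -> 'I_m -> R) (A : {ffun 'I_m -> 'I_n.+1}) i :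
  \sum_j bundle_cost v A i j = \sum_e v i e.
Proof.
by rewrite (partition_big (fun e => A e) predT) //=; apply: eq_bigr.
Qed.

Lemma ms_ge (R : realType) n m (w : 'I_n.+1 -> R) (v : 'I_n.+1 -> 'I_m -> R) i A j :
  (forall j, 0 < w j) -> bundle_cost v A i j <= max_share w v i A * w j.
Proof.
move=> wp; rewrite -ler_pdivrMr ?wp //.
rewrite /max_share; exact: (le_bigmax 0 (fun j => bundle_cost v A i j / w j) j).
Qed.

Lemma WMMS_exact (R : realType) n m (w : 'I_n.+1 -> R) (v : 'I_n.+1 -> 'I_m -> R) i
  (Q : {ffun 'I_m -> 'I_n.+1}) :
  (forall j, 0 < w j) -> \sum_e v i e = \sum_j w j ->
  (forall j, bundle_cost v Q i j <= w j) -> WMMS w v i = w i.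
Proof.
move=> wp hs hQ.
have Wp : 0 < \sum_j w j.
  by rewrite (bigD1 ord0) //= ltr_pwDl ?wp // sumr_ge0 // => k _; exact: ltW.
have lo : forall A, 1 <= max_share w v i A.
  move=> A.
  have : \sum_j w j <= max_share w v i A * \sum_j w j.
    have e1 : \sum_j w j = \sum_j bundle_cost v A i j by rewrite bc_sum hs.
    rewrite {1}e1 mulr_sumr; apply: ler_sum => j _; exact: ms_ge wp.
  by rewrite -{1}(mul1r (\sum_j w j)) ler_pM2r.
have up : max_share w v i Q <= 1.
  rewrite /max_share; apply: bigmax_le => // j _.
  by rewrite ler_pdivrMr ?wp // mul1r.
rewrite /WMMS.
rewrite -[RHS]mulr1; congr (_ * _).
apply/le_anti/andP; split.
  apply: le_trans up; exact: bigmin_le.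
by apply: le_bigmin => // A _; exact: lo.
Qed.

Section Core.
Variables (R : realType) (n m : nat) (w : 'I_n.+1 -> R) (v : 'I_n.+1 -> 'I_m -> R).
Hypotheses (wpos : forall i, 0 < w i) (vnn : forall i e, 0 <= v i e)
  (wsort : forall i j : 'I_n.+1, (i <= j)%N -> w j <= w i).

Definition pw (k : nat) : R := (2 ^ k)%:R.
Lemma pw_gt0 k : 0 < pw k. Proof. by rewrite /pw ltr0n expn_gt0. Qed.
Lemma pwD a b : pw (a + b) = pw a * pw b. Proof. by rewrite /pw expnD natrM. Qed.
Lemma pw_ge1 k : 1 <= pw k. Proof. by rewrite /pw ler1n expn_gt0. Qed.
Lemma pw_mono a b : (a <= b)%N -> pw a <= pw b.
Proof. by move=> h; rewrite /pw ler_nat leq_pexp2l. Qed.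
Lemma pwS k : pw k.+1 = 2 * pw k. Proof. by rewrite /pw expnS natrM. Qed.
Lemma pwE k : pw k = 2%:R ^+ k. Proof. by rewrite /pw natrX. Qed.

Definition W := \sum_i w i.
Lemma W_gt0 : 0 < W.
Proof. by rewrite /W (bigD1 ord0) //= ltr_pwDl ?wpos // sumr_ge0 // => i _; exact: ltW. Qed.
Lemma w_le_W j : w j <= W.
Proof.
rewrite /W (bigD1 j) //= lerDl sumr_ge0 // => i _; exact: ltW.
Qed.

Lemma exP j : exists p, (W / pw p <= w j).
Proof.
have h : 0 <= W / w j by rewrite divr_ge0 // ltW ?wpos ?W_gt0.
exists (Num.Def.archi_bound (W / w j)).
have := archi_boundP h; set N := Num.Def.archi_bound _ => hN.
rewrite ler_pdivrMr ?pw_gt0 //.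
rewrite -ler_pdivrMl ?wpos //.
rewrite mulrC; apply: ltW; apply: (lt_le_trans hN).
rewrite /pw ler_nat; apply: ltnW; exact: ltn_expl.
Qed.

Definition p j := ex_minn (exP j).

Lemma p1 j : W / pw (p j) <= w j.
Proof. by rewrite /p; case: ex_minnP. Qed.

Lemma p2 j : w j < 2 * (W / pw (p j)).
Proof.
rewrite /p; case: ex_minnP => q h1 h2.
case: q h1 h2 => [|q] h1 h2.
  rewrite /pw expn0 divr1; have := w_le_W j; have := wpos j; lra.
have : ~~ (W / pw q <= w j) by apply/negP => /h2; rewrite ltnn.
rewrite -ltNge => h.
have e : 2 * (W / pw q.+1) = W / pw q.
  rewrite pwS; have := pw_gt0 q => hq; field; lra.
by rewrite e.
Qed.

Lemma p_mono (i j : 'I_n.+1) : (i <= j)%N -> (p i <= p j)%N.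
Proof.
move=> ij; rewrite /p; case: ex_minnP => q h1 h2; apply: h2.
rewrite -/(p j); apply: le_trans (p1 j) (wsort ij).
Qed.

Definition d j := (p j - p ord0)%N.
Lemma d0 : d ord0 = 0%N. Proof. by rewrite /d subnn. Qed.
Lemma dE j : (d j + p ord0 = p j)%N.
Proof. by rewrite /d subnK // p_mono. Qed.
Lemma d_mono (i j : 'I_n.+1) : (i <= j)%N -> (d i <= d j)%N.
Proof. by move=> h; rewrite /d leq_sub2r // p_mono. Qed.

Definition Z := \sum_j (pw (d j))^-1.
Lemma Z_ge1 : 1 <= Z.
Proof.
rewrite /Z (bigD1 ord0) //= d0 /pw expn0 invr1 lerDl sumr_ge0 // => i _.
by rewrite invr_ge0 ltW ?pw_gt0.
Qed.
Lemma Z_gt0 : 0 < Z. Proof. by apply: lt_le_trans Z_ge1. Qed.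

Definition wc j := (pw (d j))^-1 / Z.
Lemma wc_gt0 j : 0 < wc j.
Proof. by rewrite /wc divr_gt0 ?invr_gt0 ?pw_gt0 ?Z_gt0. Qed.
Lemma wc_sum : \sum_j wc j = 1.
Proof. by rewrite /wc -mulr_suml -/Z divff // gt_eqF ?Z_gt0. Qed.
Lemma wc0 : wc ord0 = Z^-1.
Proof. by rewrite /wc d0 /pw expn0 invr1 mul1r. Qed.
Lemma wc_form j : wc j = wc ord0 / 2%:R ^+ (d j).
Proof. by rewrite wc0 /wc -pwE mulrC. Qed.
Lemma wc_sort (i j : 'I_n.+1) : (i <= j)%N -> wc j <= wc i.
Proof.
move=> h; rewrite /wc ler_pM2r ?invr_gt0 ?Z_gt0 //.
by rewrite lef_pV2 ?posrE ?pw_gt0 // pw_mono // d_mono.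
Qed.
Lemma wc_le0 j : wc j <= wc ord0.
Proof. exact: wc_sort. Qed.

Definition C := pw (p ord0) / (Z * W).
Lemma C_gt0 : 0 < C.
Proof. by rewrite /C divr_gt0 ?pw_gt0 // mulr_gt0 ?Z_gt0 ?W_gt0. Qed.
Lemma wcE j : wc j = C * (W / pw (p j)).
Proof.
rewrite /wc /C -(dE j) pwD.
have := pw_gt0 (d j); have := pw_gt0 (p ord0); have := Z_gt0; have := W_gt0.
move=> *; field; lra.
Qed.

Definition beta := C / 2.
Lemma beta_gt0 : 0 < beta. Proof. by rewrite /beta; have := C_gt0; lra. Qed.
Lemma F1 j : beta * w j < wc j.
Proof.
rewrite wcE /beta; have := p2 j; have := C_gt0 => hC h.
rewrite -mulrA ltr_pM2l //; lra.
Qed.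
Lemma F2 j : wc j <= 2 * beta * w j.
Proof.
rewrite wcE /beta; have := p1 j; have := C_gt0 => hC h.
have -> : 2 * (C / 2) * w j = C * w j by field.
by rewrite ler_pM2l.
Qed.

Definition gap j := wc j - beta * w j.
Lemma gap_gt0 j : 0 < gap j. Proof. by rewrite /gap subr_gt0 F1. Qed.
Definition Nb j := Num.Def.archi_bound (m%:R * wc ord0 / gap j).
Definition P := (\max_(j < n.+1) maxn (d j) (Nb j))%N.
Lemma dP j : (d j <= P)%N.
Proof. apply: leq_trans (leq_maxl _ (Nb j)) _; rewrite /P; exact: (leq_bigmax j). Qed.
Lemma NbP j : (Nb j <= P)%N.
Proof. apply: leq_trans (leq_maxr (d j) _) _; rewrite /P; exact: (leq_bigmax j). Qed.

Definition delta := wc ord0 / pw P.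
Lemma delta_gt0 : 0 < delta. Proof. by rewrite /delta divr_gt0 ?wc_gt0 ?pw_gt0. Qed.
Lemma mdelta j : m%:R * delta < gap j.
Proof.
have h0 : 0 <= m%:R * wc ord0 / gap j.
  by apply: divr_ge0; [apply: mulr_ge0; [exact: ler0n | exact: ltW (wc_gt0 _)] | exact: ltW (gap_gt0 _)].
have := archi_boundP h0; rewrite -/(Nb j) => hN.
have hP : (Nb j)%:R <= pw P.
  rewrite /pw ler_nat; apply: leq_trans (NbP j) _; apply: ltnW; exact: ltn_expl.
have h1 : m%:R * wc ord0 / gap j < pw P by apply: lt_le_trans hN hP.
rewrite /delta mulrA ltr_pdivrMr ?pw_gt0 //.
by rewrite -ltr_pdivrMl ?gap_gt0 // mulrC.
Qed.
Lemma wc_delta j : wc j = delta * (2 ^ (P - d j))%:R.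
Proof.
rewrite wc_form /delta -pwE -/(pw (P - d j)).
have e : pw P = pw (d j) * pw (P - d j) by rewrite -pwD subnKC ?dP.
by rewrite e invfM mulrA mulfVK // gt_eqF ?pw_gt0.
Qed.

Lemma exq (x : R) : exists k, (x <= delta * pw k) || (P <= k)%N.
Proof. by exists P; rewrite leqnn orbT. Qed.
Definition q x := ex_minn (exq x).
Definition rnd x := delta * pw (q x).

Lemma q_le x : (q x <= P)%N.
Proof. by rewrite /q; case: ex_minnP => k _ h; apply: h; rewrite leqnn orbT. Qed.
Lemma rnd_ge x : x <= wc ord0 -> x <= rnd x.
Proof.
rewrite /rnd /q; case: ex_minnP => k /orP [h|h] h2 hx //.
have kP : k = P.
  apply/eqP; rewrite eqn_leq h andbT.
  by apply: h2; rewrite leqnn orbT.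
by rewrite kP /delta divfK // gt_eqF ?pw_gt0.
Qed.
Lemma rnd_le x : 0 <= x -> rnd x <= 2 * x + delta.
Proof.
rewrite /rnd /q; case: ex_minnP => k h1 h2 hx.
case: k h1 h2 => [|k] h1 h2.
  rewrite /pw expn0 mulr1; lra.
have : ~~ ((x <= delta * pw k) || (P <= k)%N) by apply/negP => /h2; rewrite ltnn.
rewrite negb_or -ltNge => /andP [h _].
rewrite pwS; have := delta_gt0; lra.
Qed.
Lemma q_mono x y : x <= y -> (q x <= q y)%N.
Proof.
move=> xy; rewrite {2}/q; case: ex_minnP => k /orP [h|h] _; rewrite /q; case: ex_minnP => k' _ h2; apply: h2.
  by rewrite (le_trans xy h).
by rewrite h orbT.
Qed.

Variables (rho : 'I_n.+1 -> 'I_m -> 'I_m) (mu : 'I_n.+1 -> R)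
  (Pt : 'I_n.+1 -> {ffun 'I_m -> 'I_n.+1}).
Hypotheses (rho_inj : forall i, injective (rho i))
  (rho_mono : forall i (k k' : 'I_m), (k <= k')%N -> v i (rho i k') <= v i (rho i k))
  (mu_ge0 : forall i, 0 <= mu i)
  (hP : forall i j, bundle_cost v (Pt i) i j <= mu i * w j).

Definition K i := beta / (2 * mu i).
Lemma K_ge0 i : 0 <= K i.
Proof. rewrite /K; have := beta_gt0; have := mu_ge0 i => h1 h2; apply: divr_ge0; [exact: ltW | apply: mulr_ge0 => //]. Qed.
Lemma twoK i j x : 0 <= x -> x <= mu i * w j -> 2 * K i * x <= beta * w j.
Proof.
move=> x0 hx; have := mu_ge0 i; rewrite le_eqVlt => /orP [/eqP m0|mp].
  rewrite /K -m0 mulr0 invr0 !mulr0 mul0r; apply: mulr_ge0; [exact: ltW beta_gt0 | exact: ltW (wpos j)].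
have -> : 2 * K i * x = beta * (x / mu i) by rewrite /K; field; lra.
rewrite ler_pM2l ?beta_gt0 // ler_pdivrMr // mulrC; exact: hx.
Qed.

Lemma v_le_bc i e : v i e <= bundle_cost v (Pt i) i (Pt i e).
Proof.
rewrite /bundle_cost (bigD1 e) //= lerDl sumr_ge0 // => *; exact: vnn.
Qed.

Lemma Kv_le i e : K i * v i e <= wc ord0.
Proof.
have h := twoK (vnn i e) (le_trans (v_le_bc i e) (hP i (Pt i e))).
have := F1 (Pt i e); have := wc_le0 (Pt i e); have := K_ge0 i; have := vnn i e.
have := beta_gt0; have := wpos (Pt i e); nra.
Qed.

Definition qq i k := q (K i * v i (rho i k)).
Definition U i j := (\sum_(k | Pt i (rho i k) == j) 2 ^ qq i k)%N.

Lemma bc_reindex i j : \sum_(k | Pt i (rho i k) == j) v i (rho i k) = bundle_cost v (Pt i) i j.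
Proof.
rewrite /bundle_cost [RHS](reindex (rho i)) //; apply: onW_bij; exact: injF_bij.
Qed.

Lemma U_le i j : (U i j <= 2 ^ (P - d j))%N.
Proof.
have hU : delta * (U i j)%:R = \sum_(k | Pt i (rho i k) == j) rnd (K i * v i (rho i k)).
  by rewrite /U natr_sum mulr_sumr.
have h1 : \sum_(k | Pt i (rho i k) == j) rnd (K i * v i (rho i k)) <=
          \sum_(k | Pt i (rho i k) == j) (2 * K i * v i (rho i k) + delta).
  apply: ler_sum => k _; rewrite -mulrA; apply: rnd_le; apply: mulr_ge0; [exact: K_ge0|exact: vnn].
have h2 : \sum_(k | Pt i (rho i k) == j) (2 * K i * v i (rho i k) + delta) <=
          beta * w j + m%:R * delta.
  rewrite big_split /= -mulr_sumr bc_reindex; apply: lerD.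
    apply: twoK (hP i j); rewrite /bundle_cost sumr_ge0 // => *; exact: vnn.
  apply: (@le_trans _ _ (\sum_(k < m) delta)).
    rewrite [X in _ <= X](bigID (fun k => Pt i (rho i k) == j)) /= lerDl sumr_ge0 // => *.
    exact: ltW delta_gt0.
  by rewrite sumr_const card_ord mulr_natl.
have h3 := mdelta j; rewrite /gap in h3.
have : delta * (U i j)%:R <= delta * (2 ^ (P - d j))%:R.
  rewrite -wc_delta hU; apply: le_trans h1 _; apply: le_trans h2 _; lra.
by rewrite ler_pM2l ?delta_gt0 // ler_nat.
Qed.

Definition nn i j := (2 ^ (P - d j) - U i j)%N.
Definition kk i := (\sum_j nn i j)%N.
Definition Ft := (\sum_(j < n.+1) 2 ^ (P - d j))%N.
Lemma kk_le i : (kk i <= Ft)%N.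
Proof. by apply: leq_sum => j _; rewrite /nn leq_subr. Qed.

Section G.
Variable g : 'I_n.+1 -> 'I_Ft -> 'I_n.+1.
Hypothesis hg : forall i j,
  \sum_(t | g i t == j) (if (t < kk i)%N then delta else 0) = delta * (nn i j)%:R.

Definition vcan (i : 'I_n.+1) (e : 'I_(m + Ft)) : R :=
  match split e with inl k => delta * pw (qq i k) | inr t => if (t < kk i)%N then delta else 0 end.
Definition Qf i : {ffun 'I_(m + Ft) -> 'I_n.+1} :=
  [ffun e => match split e with inl k => Pt i (rho i k) | inr t => g i t end].

Lemma split_l (k : 'I_m) : split (lshift Ft k) = inl k.
Proof. exact: (unsplitK (inl k)). Qed.
Lemma split_r (t : 'I_Ft) : split (rshift m t) = inr t.
Proof. exact: (unsplitK (inr t)). Qed.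

Lemma bc_Q i j : bundle_cost vcan (Qf i) i j = wc j.
Proof.
rewrite /bundle_cost big_split_ord /=.
rewrite (eq_bigl (fun k => Pt i (rho i k) == j)); last by move=> k; rewrite ffunE split_l.
rewrite (eq_bigr (fun k => delta * pw (qq i k))); last by move=> k _; rewrite /vcan split_l.
rewrite (eq_bigl (fun t => g i t == j)); last by move=> t; rewrite ffunE split_r.
rewrite (eq_bigr (fun t : 'I_Ft => if (t < kk i)%N then delta else 0)); last by move=> t _; rewrite /vcan split_r.
rewrite hg -mulr_sumr /pw -natr_sum -/(U i j) -mulrDr -natrD /nn subnKC ?U_le //.
by rewrite wc_delta.
Qed.

Lemma vcan_sum i : \sum_e vcan i e = 1.
Proof.
by rewrite -(bc_sum vcan (Qf i) i) (eq_bigr _ (fun j _ => bc_Q i j)) wc_sum.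
Qed.

Lemma vcan_ge0 i e : 0 <= vcan i e.
Proof.
rewrite /vcan; case: split => [k|t]; first by rewrite mulr_ge0 ?ltW ?delta_gt0 ?pw_gt0.
by case: ifP => _; rewrite ?lexx ?ltW ?delta_gt0.
Qed.

Lemma canon : canonical_instance wc vcan.
Proof.
split.
- by split; [exact: wc_gt0 | exact: vcan_ge0].
- split; first exact: wc_sort.
  split; first exact: wc_sum.
  by move=> i; exists (d i); exact: wc_form.
- split; first exact: vcan_sum.
  move=> i e; rewrite /vcan; case: split => [k|t].
    right; exists (P - qq i k)%N; rewrite /delta -!pwE.
    have e1 : pw P = pw (P - qq i k) * pw (qq i k) by rewrite -pwD subnK ?q_le.
    by rewrite e1 invfM mulrA mulfVK // gt_eqF ?pw_gt0.
  case: ifP => _; last by left.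
  by right; exists P; rewrite /delta pwE.
- move=> i e e'; rewrite /vcan; case: splitP => [k' ek'|t' et']; case: splitP => [k ek|t et] h.
  + rewrite ler_pM2l ?delta_gt0 // pw_mono // /qq; apply: q_mono; apply: ler_wpM2l; first exact: K_ge0.
    by apply: rho_mono; rewrite -ek -ek'.
  + by exfalso; move: h; rewrite et ek' leqNgt (leq_trans (ltn_ord k')) // leq_addr.
  + case: ifP => _; last exact: mulr_ge0 (ltW delta_gt0) (ltW (pw_gt0 _)).
    by rewrite -[X in X <= _]mulr1 ler_pM2l ?delta_gt0 // pw_ge1.
  + case: ifP => h1; last by case: ifP => _; rewrite ?lexx ?ltW ?delta_gt0.
    have : (t < kk i)%N by apply: leq_ltn_trans h1; rewrite -(leq_add2l m) -et -et'.
    by move=> ->.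
- by move=> i; apply: (@WMMS_exact _ _ _ _ _ i (Qf i)); [exact: wc_gt0 | rewrite vcan_sum wc_sum | move=> j; rewrite bc_Q].
Qed.
End G.

Variables (alpha : R) (halpha : 1 <= alpha)
  (Hcanon : forall (n m : nat) (w : 'I_n.+1 -> R) (v : 'I_n.+1 -> 'I_m -> R),
      canonical_instance w v ->
      exists A : {ffun 'I_m -> 'I_n.+1}, is_alpha_WMMS alpha w v A).

Lemma core_sorted : exists A : {ffun 'I_m -> 'I_n.+1},
  forall i, bundle_cost v A i i <= 4 * alpha * (mu i * w i).
Proof.
have [g hg] : exists g : 'I_n.+1 -> 'I_Ft -> 'I_n.+1, forall i j,
  \sum_(t | g i t == j) (if (t < kk i)%N then delta else 0) = delta * (nn i j)%:R.
  apply: (fin_all_exists (fun i => fill delta (kk_le i))).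
have cn := canon hg.
have [A' hA'] := Hcanon cn.
case: cn => _ _ _ _ hW.
pose o k := A' (lshift Ft k).
have [A hA] := @picking R n m v rho o rho_inj rho_mono.
exists A => i.
have := mu_ge0 i; rewrite le_eqVlt => /orP [/eqP m0|mp].
  rewrite -m0 mul0r mulr0 /bundle_cost big1 // => e _.
  apply/eqP; rewrite eq_le vnn andbT.
  by have := le_trans (v_le_bc i e) (hP i (Pt i e)); rewrite -m0 mul0r.
have Kp : 0 < K i by rewrite /K divr_gt0 ?beta_gt0 // mulr_gt0.
apply: le_trans (hA i) _.
have s1 : \sum_(k | o k == i) v i (rho i k) <= (\sum_(k | o k == i) delta * pw (qq i k)) / K i.
  rewrite mulr_suml; apply: ler_sum => k _.
  rewrite ler_pdivlMr // mulrC; apply: rnd_ge; exact: Kv_le.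
have s2 : \sum_(k | o k == i) delta * pw (qq i k) <= bundle_cost vcan A' i i.
  have e2 : \sum_(k | o k == i) delta * pw (qq i k) =
     \sum_(k | A' (lshift Ft k) == i) vcan i (lshift Ft k).
    by apply: eq_bigr => k _; rewrite /vcan split_l.
  rewrite e2 /bundle_cost big_split_ord /=.
  rewrite lerDl sumr_ge0 // => t _; exact: vcan_ge0.
have s3 := hA' i; rewrite hW in s3.
have s4 := F2 i.
apply: le_trans s1 _; rewrite ler_pdivrMr //.
apply: (le_trans s2); apply: (le_trans s3).
rewrite /K.
have bp := beta_gt0.
have -> : 4 * alpha * (mu i * w i) * (beta / (2 * mu i)) = alpha * (2 * beta * w i).
  field; lra.
apply: ler_wpM2l; [exact: le_trans ler01 halpha | exact: s4].
Qed.
End Core.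

Lemma bigmin_attain (R : realType) (T : finType) (F : T -> R) (x0 : T) :
  exists t, F t <= \big[Num.min/F x0]_t F t.
Proof.
apply: (big_ind (fun y => exists t, F t <= y)).
- by exists x0.
- move=> a b [t1 h1] [t2 h2].
  case: (leP a b) => hab.
  + by exists t1.
  + by exists t2.
- by move=> t _; exists t.
Qed.

Lemma core_general (R : realType) (alpha : R) (halpha : 1 <= alpha)
  (Hcanon : forall (n m : nat) (w : 'I_n.+1 -> R) (v : 'I_n.+1 -> 'I_m -> R),
      canonical_instance w v ->
      exists A : {ffun 'I_m -> 'I_n.+1}, is_alpha_WMMS alpha w v A)
  n m (w : 'I_n.+1 -> R) (v : 'I_n.+1 -> 'I_m -> R)
  (wpos : forall i, 0 < w i) (vnn : forall i e, 0 <= v i e)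
  (mu : 'I_n.+1 -> R) (Pt : 'I_n.+1 -> {ffun 'I_m -> 'I_n.+1})
  (mu_ge0 : forall i, 0 <= mu i)
  (hP : forall i j, bundle_cost v (Pt i) i j <= mu i * w j) :
  exists A : {ffun 'I_m -> 'I_n.+1},
    forall i, bundle_cost v A i i <= 4 * alpha * (mu i * w i).
Proof.
have [s [sbij smono]] := sortperm w.
have sinj : injective s := bij_inj sbij.
pose si := invF sinj.
have sK : cancel s si by exact: invF_f.
have siK : cancel si s by exact: f_invF.
pose w' k := w (s k).
pose v' k := v (s k).
pose mu' k := mu (s k).
pose Pt' k := [ffun e => si (Pt (s k) e)].
have [rho hrho] := fin_all_exists (fun k => sortperm (v' k)).
have hP' : forall k j, bundle_cost v' (Pt' k) k j <= mu' k * w' j.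
  move=> k j; apply: le_trans (hP (s k) (s j)).
  rewrite /bundle_cost le_eqVlt; apply/orP; left; apply/eqP.
  by apply: eq_bigl => e; rewrite ffunE (can2_eq siK sK).
have [A' hA'] := @core_sorted R n m w' v' (fun k => wpos (s k)) (fun k e => vnn (s k) e)
  smono rho mu' Pt' (fun k => bij_inj (proj1 (hrho k))) (fun k => proj2 (hrho k))
  (fun k => mu_ge0 (s k)) hP' alpha halpha Hcanon.
exists [ffun e => s (A' e)] => i.
rewrite -(siK i); set k := si i.
apply: le_trans (hA' k).
rewrite /bundle_cost le_eqVlt; apply/orP; left; apply/eqP.
by apply: eq_bigl => e; rewrite ffunE (inj_eq sinj).
Qed.

Theorem theorem3p1 (R : realType) (alpha : R) (halpha : 1 <= alpha)
  (Hcanon : forall (n m : nat) (w : 'I_n.+1 -> R) (v : 'I_n.+1 -> 'I_m -> R),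
      canonical_instance w v ->
      exists A : {ffun 'I_m -> 'I_n.+1}, is_alpha_WMMS alpha w v A) :
  forall (n m : nat) (w : 'I_n.+1 -> R) (v : 'I_n.+1 -> 'I_m -> R),
    valid_instance w v ->
    exists A : {ffun 'I_m -> 'I_n.+1}, is_alpha_WMMS (4 * alpha) w v A.
Proof.
move=> n m w v [wpos vnn].
pose mu i := \big[Num.min/max_share w v i [ffun=> ord0]]_(A : {ffun 'I_m -> 'I_n.+1})
          max_share w v i A.
have [Pt hPt] := fin_all_exists (fun i => bigmin_attain (max_share w v i) [ffun=> ord0]).
have ms0 : forall i A, 0 <= max_share w v i A.
  move=> i A; apply: le_trans (le_bigmax 0 (fun j => bundle_cost v A i j / w j) ord0).
  apply: divr_ge0; [apply: sumr_ge0 => e _; exact: vnn | exact: ltW (wpos _)].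
have mu_ge0 : forall i, 0 <= mu i.
  by move=> i; apply: le_bigmin => // A _.
have hP : forall i j, bundle_cost v (Pt i) i j <= mu i * w j.
  move=> i j; apply: le_trans (@ms_ge R n m w v i (Pt i) j wpos) _.
  by apply: ler_wpM2r; [exact: ltW (wpos j) | exact: hPt i].
have [A hA] := core_general halpha Hcanon wpos vnn mu_ge0 hP.
exists A => i; rewrite /WMMS -/(mu i) (mulrC (w i)); exact: hA.
Qed.
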